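(* Let $\mathcal{B}=(Q,\Sigma,\delta,q_0,F)$ be a Büchi automaton, let $\mathcal{S}=(X,\xrightarrow{\Sigma},\le)$ be a very-WSTS, and let $x_0\in X$. There exists $w\in L(\mathcal{B})\cap\mathrm{Traces}^\omega(\mathcal{S},x_0)$ if and only if there exists $q_f\in F$ such that $(q_f,\bot)$ is repeatedly coverable from $(q_0,x_0)$ in $\mathcal{B}\times\mathcal{S}_\bot$.
   Context: A (labeled, ordered) transition system is $\mathcal{S}=(X,\xrightarrow{\Sigma},\le)$: $X$ a set, $\Sigma$ a finite alphabet, $\xrightarrow{a}\subseteq X\times X$, $\le$ a quasi-ordering; relations extend to words. $\mathrm{Traces}^\omega(\mathcal{S},x)=\{a_1a_2\cdots\in\Sigma^\omega: x\xrightarrow{a_1}x_1\xrightarrow{a_2}x_2\cdots \text{ for some } x_1,x_2,\ldots\}$. A state $y$ is repeatedly coverable from $x$ if there are $z_0,z_1,\dots$ with $x\xrightarrow{*}z_0\xrightarrow{+}z_1\xrightarrow{+}\cdots$ and $z_i\ge y$ for all $i$. Very-WSTS: $\le$ is a wqo; $\mathcal{S}$ has strong monotonicity ($x\xrightarrow{a}y$, $x'\ge x$ imply $x'\xrightarrow{a}y'$ for some $y'\ge y$); its completion $\widehat{\mathcal{S}}=(\mathrm{Idl}(X),\Rightarrow_\Sigma,\subseteq)$ — where $\mathrm{Idl}(X)$ is the set of nonempty downward-closed directed subsets and $I\xRightarrow{a}J$ iff $J$ is a $\subseteq$-maximal ideal included in $\downarrow\{y:\exists x\in I,\ x\xrightarrow{a}y\}$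 — is deterministic, has $\subseteq$ as a wqo, is monotone, and has strong-strict monotonicity (strong monotonicity plus: $I\xRightarrow{a}J$, $I'\supset I$ imply $I'\xRightarrow{a}J'$ for some $J'\supset J$); and $\mathrm{Idl}(X)$ has finitely many levels, where $\mathrm{Idl}_0(X)=\mathrm{Idl}(X)$, $\mathrm{Idl}_n(X)$ is the set of unions of strictly increasing sequences in $\mathrm{Idl}_{n-1}(X)$, and finitely many levels means some $\mathrm{Idl}_n(X)=\emptyset$. A Büchi automaton $\mathcal{B}=(Q,\Sigma,\delta,q_0,F)$ accepts the infinite words having a run from $q_0$ visiting $F$ infinitely often; $L(\mathcal{B})$ is its language. $\mathcal{S}_\bot=(X\cup\{\bot\},\xrightarrow{\Sigma},\le_\bot)$ adds a new state $\bot$ with no transitions, below every state: $\le_\bot=\le\cup\{(\bot,y):y\in X\cup\{\bot\}\}$. The product $\mathcal{B}\times\mathcal{T}$ of $\mathcal{B}$ with a transition system $\mathcal{T}=(Y,\xrightarrow{\Sigma},\le)$ has states $Q\times Y$, alphabet $\Sigma\times Q$, ordering $(p,x)\le(q,y)$ iff $p=q$ and $x\le y$, and transitions $(p,x)\xrightarrow{(a,r)}(q,y)$ iff $(p,a,r)\in\delta$, $q=r$ and $x\xrightarrow{a}y$. *)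

(* Defs.v *)
From Stdlib Require Import Relations.
From mathcomp Require Import all_boot.

Set Implicit Arguments.
Unset Strict Implicit.
Unset Printing Implicit Defensive.

Record TS (Sigma X : Type) := mkTS {
  trans : Sigma -> X -> X -> Prop;
  tle   : X -> X -> Prop
}.
Arguments mkTS {Sigma X}.

Section TSDefs.
Variables (Sigma X : Type) (S : TS Sigma X).

Definition step (x y : X) : Prop := exists a : Sigma, trans S a x y.
Definition reach_star : X -> X -> Prop := clos_refl_trans X step.
Definition reach_plus : X -> X -> Prop := clos_trans X step.

(** Traces^omega(S, x): letters a_1 a_2 ... are [w 0], [w 1], ...;
    states x = xs 0, x_1 = xs 1, ... *)
Definition traces_omega (x : X) (w : nat -> Sigma) : Prop :=
  exists xs : nat -> X, xs 0 = x /\ forall n, trans S (w n) (xs n) (xs n.+1).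

Definition rep_coverable (x y : X) : Prop :=
  exists z : nat -> X,
    reach_star x (z 0) /\ (forall i, reach_plus (z i) (z i.+1)) /\
    (forall i, tle S y (z i)).

Definition quasi_order (le : X -> X -> Prop) : Prop :=
  (forall x, le x x) /\ (forall x y z, le x y -> le y z -> le x z).
Definition wqo (le : X -> X -> Prop) : Prop :=
  quasi_order le /\
  forall f : nat -> X, exists i j, i < j /\ le (f i) (f j).

Definition strong_monotone : Prop :=
  forall a x y x', trans S a x y -> tle S x x' ->
    exists y', trans S a x' y' /\ tle S y y'.

Definition monotone : Prop :=
  forall a x y x', trans S a x y -> tle S x x' ->
    exists y', reach_star x' y' /\ tle S y y'.

Definition subset (A B : X -> Prop) : Prop := forall x, A x -> B x.
Definition set_eq (A B : X -> Prop) : Prop := forall x, A x <-> B x.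
Definition strict_subset (A B : X -> Prop) : Prop := subset A B /\ ~ subset B A.

Definition downclosed (A : X -> Prop) : Prop :=
  forall x y, A y -> tle S x y -> A x.
Definition directed (A : X -> Prop) : Prop :=
  forall x y, A x -> A y -> exists z, A z /\ tle S x z /\ tle S y z.
Definition is_ideal (A : X -> Prop) : Prop :=
  (exists x, A x) /\ downclosed A /\ directed A.

Definition down_post (a : Sigma) (I : X -> Prop) : X -> Prop :=
  fun z => exists x y, I x /\ trans S a x y /\ tle S z y.

Definition cstep (a : Sigma) (I J : X -> Prop) : Prop :=
  is_ideal J /\ subset J (down_post a I) /\
  forall J', is_ideal J' -> subset J J' -> subset J' (down_post a I) ->
    subset J' J.

Definition creach_step (I J : X -> Prop) : Prop := exists a, cstep a I J.
Definition creach_star : (X -> Prop) -> (X -> Prop) -> Prop :=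
  clos_refl_trans (X -> Prop) creach_step.

Definition compl_deterministic : Prop :=
  forall a I J J', is_ideal I -> cstep a I J -> cstep a I J' -> set_eq J J'.
Definition compl_wqo : Prop :=
  forall f : nat -> (X -> Prop), (forall n, is_ideal (f n)) ->
    exists i j, i < j /\ subset (f i) (f j).
Definition compl_monotone : Prop :=
  forall a I J I', is_ideal I -> is_ideal I' -> cstep a I J -> subset I I' ->
    exists J', creach_star I' J' /\ subset J J'.
Definition compl_strong_monotone : Prop :=
  forall a I J I', is_ideal I -> is_ideal I' -> cstep a I J -> subset I I' ->
    exists J', cstep a I' J' /\ subset J J'.
Definition compl_strong_strict_monotone : Prop :=
  compl_strong_monotone /\
  forall a I J I', is_ideal I -> is_ideal I' -> cstep a I J ->
    strict_subset I I' -> exists J', cstep a I' J' /\ strict_subset J J'.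

Fixpoint level (n : nat) (A : X -> Prop) : Prop :=
  match n with
  | 0 => is_ideal A
  | m.+1 => exists s : nat -> (X -> Prop),
      (forall i, level m (s i)) /\ (forall i, strict_subset (s i) (s i.+1)) /\
      set_eq A (fun x => exists i, s i x)
  end.
Definition finitely_many_levels : Prop :=
  exists n, forall A, ~ level n A.

Definition very_WSTS : Prop :=
  wqo (tle S) /\ strong_monotone /\
  compl_deterministic /\ compl_wqo /\ compl_monotone /\
  compl_strong_strict_monotone /\ finitely_many_levels.

End TSDefs.

Record Buchi (Q Sigma : Type) := mkBuchi {
  bdelta : Q -> Sigma -> Q -> Prop;
  binit  : Q;
  bfinal : Q -> Prop
}.
Arguments mkBuchi {Q Sigma}.

Definition buchi_accepts (Q Sigma : Type) (B : Buchi Q Sigma) (w : nat -> Sigma) :=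
  exists rho : nat -> Q, rho 0 = binit B /\
    (forall n, bdelta B (rho n) (w n) (rho n.+1)) /\
    (forall N, exists n, N <= n /\ bfinal B (rho n)).

(** * S_bot : bottom = None *)
Definition bot_trans (Sigma X : Type) (S : TS Sigma X) (a : Sigma) (x y : option X) :=
  match x, y with
  | Some x, Some y => trans S a x y
  | _, _ => False
  end.
Definition bot_le (Sigma X : Type) (S : TS Sigma X) (x y : option X) :=
  match x, y with
  | None, _ => True
  | Some x, Some y => tle S x y
  | Some _, None => False
  end.
Definition S_bot (Sigma X : Type) (S : TS Sigma X) : TS Sigma (option X) :=
  mkTS (bot_trans S) (bot_le S).

Definition product (Q Sigma Y : Type) (B : Buchi Q Sigma) (T : TS Sigma Y)
  : TS (Sigma * Q) (Q * Y) :=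
  mkTS (fun (ar : Sigma * Q) (px qy : Q * Y) =>
          bdelta B px.1 ar.1 ar.2 /\ qy.1 = ar.2 /\ trans T ar.1 px.2 qy.2)
       (fun px qy => px.1 = qy.1 /\ tle T px.2 qy.2).

(* Main.v *)
Require Import Defs.
From mathcomp Require Import all_boot.
From Stdlib Require Import Relations Classical ClassicalEpsilon.

Section Aux.
Variables (Q Sigma : finType) (X : Type) (B : Buchi Q Sigma) (S : TS Sigma X).

Lemma pigeon (rho : nat -> Q) :
  (forall N, exists n, N <= n /\ bfinal B (rho n)) ->
  exists q, bfinal B q /\ forall N, exists n, N <= n /\ rho n = q.
Proof.
move=> Hinf; apply: NNPP => Hno.
have Hq : forall q, bfinal B q -> exists N, forall n, N <= n -> rho n <> q.
  move=> q fq; apply: NNPP => H1; apply: Hno; exists q; split=> // N.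
  apply: NNPP => H2; apply: H1; exists N => n Nn E; apply: H2; by exists n.
have Hl : forall l : seq Q, exists N, forall q, q \in l -> bfinal B q ->
    forall n, N <= n -> rho n <> q.
  elim=> [|a l [N HN]]; first by exists 0.
  case: (classic (bfinal B a)) => fa.
    have [Na HNa] := Hq a fa.
    exists (maxn N Na) => q; rewrite inE => /orP [/eqP -> _|ql fq] n Nn.
      by apply: HNa; apply: leq_trans Nn; rewrite leq_maxr.
    by apply: HN => //; apply: leq_trans Nn; rewrite leq_maxl.
  exists N => q; rewrite inE => /orP [/eqP -> //|ql fq] n Nn.
  by apply: HN.
have [N HN] := Hl (enum Q).
have [n [Nn fn]] := Hinf N.
apply: (HN (rho n) _ fn n Nn erefl).
by rewrite mem_enum inE.
Qed.

Definition P := product B (S_bot S).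

Lemma stepP l (p p' : Q * option X) : trans P l p p' -> step P p p'.
Proof. by move=> H; exists l. Qed.

Lemma fwd (w : nat -> Sigma) (rho : nat -> Q) (xs : nat -> X) :
  (forall n, bdelta B (rho n) (w n) (rho n.+1)) ->
  (forall n, trans S (w n) (xs n) (xs n.+1)) ->
  forall j d, reach_star P (rho j, Some (xs j)) (rho (j + d), Some (xs (j + d)))
   /\ (0 < d -> reach_plus P (rho j, Some (xs j)) (rho (j + d), Some (xs (j + d)))).
Proof.
move=> Hr Hx j d; elim: d => [|d [IH1 IH2]].
  by rewrite addn0; split=> //; apply: rt_refl.
have st : step P (rho (j + d), Some (xs (j + d))) (rho (j + d.+1), Some (xs (j + d.+1))).
  exists (w (j + d), rho (j + d).+1); rewrite addnS; split=> //=.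
split.
  by apply: rt_trans IH1 (rt_step _ _ _ _ st).
move=> _; case: d IH1 IH2 st => [|d] IH1 IH2 st.
  by rewrite addn0 in st *; apply: t_step.
by apply: t_trans (IH2 erefl) (t_step _ _ _ _ st).
Qed.

Fixpoint pathlen (k : nat) (p q : Q * option X) : Prop :=
  match k with
  | 0 => step P p q
  | k'.+1 => exists p', step P p p' /\ pathlen k' p' q
  end.

Lemma plus_pathlen p q : reach_plus P p q -> exists k, pathlen k p q.
Proof.
move=> H; apply clos_trans_t1n in H; elim: H => [x y sxy|x y z sxy _ [k Hk]].
  by exists 0.
by exists k.+1; exists y.
Qed.

Lemma star_plus (T : Type) (R : relation T) x y zz :
  clos_refl_trans T R x y -> clos_trans T R y zz -> clos_trans T R x zz.
Proof.
move=> H; elim: H zz => [a b ab|a|a b c _ IH1 _ IH2] zz H.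
- exact: t_trans (t_step _ _ _ _ ab) H.
- exact: H.
- exact: IH1 (IH2 _ H).
Qed.

End Aux.
Arguments P {Q Sigma X} B S.
Arguments pathlen {Q Sigma X} B S k p q.
Arguments plus_pathlen {Q Sigma X} B S p q.

Theorem proposition19 (Q Sigma : finType) (X : Type)
  (B : Buchi Q Sigma) (S : TS Sigma X) (x0 : X) :
  very_WSTS S ->
  ((exists w : nat -> Sigma, buchi_accepts B w /\ traces_omega S x0 w) <->
   (exists qf : Q, bfinal B qf /\
      rep_coverable (product B (S_bot S)) (binit B, Some x0) (qf, None))).
Proof.
move=> _; split.
  move=> [w [[rho [r0 [Hr Hf]]] [xs [x0E Hx]]]].
  have [qf [fqf Hqf]] := @pigeon Q Sigma B rho Hf.
  exists qf; split=> //.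
  pose g N := proj1_sig (constructive_indefinite_description _ (Hqf N)).
  have gP N : N <= g N /\ rho (g N) = qf by rewrite /g; case: constructive_indefinite_description.
  pose m := fix m i := match i with 0 => g 0 | i'.+1 => g (m i').+1 end.
  exists (fun i => (rho (m i), Some (xs (m i)))); split; [|split].
  - have [H _] := @fwd Q Sigma X B S w rho xs Hr Hx 0 (m 0).
    by rewrite add0n r0 x0E in H.
  - move=> i; have [_ H] := @fwd Q Sigma X B S w rho xs Hr Hx (m i) (m i.+1 - m i).
    have lt : m i < m i.+1 by have [] := gP (m i).+1.
    rewrite subnKC in H; last by apply: ltnW.
    by apply: H; rewrite subn_gt0.
  - move=> i; split=> //=; case: i => [|i] /=; [have [_ ->] := gP 0 | have [_ ->] := gP (m i).+1]; done.
move=> [qf [fqf [z [z0 [zp zc]]]]].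
pose T := (Q * option X)%type.
pose Inv (s : T * nat * nat) := pathlen B S s.2 s.1.1 (z s.1.2).
have zq : forall i, (z i).1 = qf by move=> i; have [H _] := zc i; rewrite -H.
have [l0 _] : exists l : Sigma * Q, True.
  have [k Hk] := plus_pathlen B S _ _ (zp 0).
  by case: k Hk => [[l _]|k [p' [[l _] _]]]; exists l.
have Hn : forall s : T * nat * nat, exists r : (Sigma * Q) * (T * nat * nat),
   Inv s -> Inv r.2 /\ trans (P B S) r.1 s.1.1 r.2.1.1 /\
   (s.2 = 0 -> r.2.1.1 = z s.1.2 /\ r.2.1.2 = s.1.2.+1) /\
   (0 < s.2 -> r.2.2 = s.2.-1).
  move=> [[p i] k]; case: (classic (Inv (p, i, k))) => HI; last first.
    by exists (l0, (p, i, k)).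
  rewrite /Inv /= in HI; case: k HI => [[l sl]|k [p' [[l sl] Hk]]].
    have [k' Hk'] := plus_pathlen B S _ _ (zp i).
    by exists (l, (z i, i.+1, k')).
  by exists (l, (p', i, k)).
have [k0 Hk0] : exists k, pathlen B S k (binit B, Some x0) (z 1).
  exact: (plus_pathlen B S _ _ (@star_plus _ _ _ _ _ z0 (zp 0))).
pose nxt s := proj1_sig (constructive_indefinite_description _ (Hn s)).
have nxtP s : Inv s -> Inv (nxt s).2 /\ trans (P B S) (nxt s).1 s.1.1 (nxt s).2.1.1 /\
   (s.2 = 0 -> (nxt s).2.1.1 = z s.1.2 /\ (nxt s).2.1.2 = s.1.2.+1) /\
   (0 < s.2 -> (nxt s).2.2 = s.2.-1).
  by rewrite /nxt; case: constructive_indefinite_description.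
pose run n := iter n (fun s => (nxt s).2) ((binit B, Some x0), 1, k0).
have runI n : Inv (run n).
  by elim: n => [//|n IH]; rewrite /run iterS; have [] := nxtP _ IH.
have runS n : run n.+1 = (nxt (run n)).2 by rewrite /run iterS.
have Hk : forall k N, (run N).2 = k -> exists n, N <= n /\ (run n).2 = 0.
  elim=> [|k IH] N HN; first by exists N.
  have [_ [_ [_ H]]] := nxtP _ (runI N).
  have E : (run N.+1).2 = k by rewrite runS H ?HN.
  have [n [Nn Hn0]] := IH N.+1 E.
  by exists n; split=> //; apply: ltnW.
have tr n : trans (P B S) (nxt (run n)).1 (run n).1.1 (run n.+1).1.1.
  by rewrite runS; have [_ []] := nxtP _ (runI n).
exists (fun n => (nxt (run n)).1.1); split.
  exists (fun n => (run n).1.1.1); split=> //; split.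
    by move=> n; have [H [E _]] := tr n; rewrite E.
  move=> N; have [n [Nn Hn0]] := Hk _ N erefl.
  exists n.+1; split; first by apply: leqW.
  have [_ [_ [H _]]] := nxtP _ (runI n).
  by rewrite runS (H Hn0).1 zq.
exists (fun n => match (run n).1.1.2 with Some x => x | None => x0 end); split=> //.
move=> n; have [_ [_ H]] := tr n; move: H.
by case: (run n).1.1.2 => [x|]; case: (run n.+1).1.1.2.
Qed.
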